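(* Let $X$ be an affine scheme of finite type over $k$, and let $Z=X_{\operatorname{Vect}(X)}$ be the closed subscheme of $X$ defined by the ideal of $\mathcal O_X$ generated by $\operatorname{Vect}(X)(\mathcal{O}_X)=\{\xi(f):\xi\in\operatorname{Vect}(X),f\in\mathcal O_X\}$ (the locus where all vector fields vanish). Then $Z$ is the support of $M(X,\operatorname{Vect}(X))$, one has $M(X,\operatorname{Vect}(X))=\mathcal{D}_Z:=(\operatorname{Vect}(X)(\mathcal{O}_X))\cdot\mathcal{D}_X\backslash\mathcal{D}_X$, and $(\mathcal{O}_X)_{\operatorname{Vect}(X)}=\mathcal{O}_Z$.
   Context: $k$ is algebraically closed of characteristic zero. $\operatorname{Vect}(X)$ is the Lie algebra of all derivations of $\mathcal O_X$. $\mathcal D$-modules are right modules, defined on singular schemes via closed embeddings into smooth affine varieties; $M(X,\mathfrak v)$ is the quotient of $\mathcal D_X$ by the right submodule generated by $\mathfrak v$. The support of $(X,\mathfrak v)$ is the closed subscheme defined by the ideal $(\mathfrak v\cdot\mathcal D_X)\cap\mathcal O_X$ of $\mathcal O_X$. $(\mathcal O_X)_{\mathfrak v}=\mathcal O_X/\mathfrak v(\mathcal O_X)$. *)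

(* Defs.v *)
From HB Require Import structures.
From mathcomp Require Import all_boot all_order all_algebra.
From mathcomp Require Import mpoly.
Set Implicit Arguments. Unset Strict Implicit. Unset Printing Implicit Defensive.
Import GRing.Theory.
Local Open Scope ring_scope.

Section Defs.
Variable k : fieldType.

(* k-linear derivations of a commutative k-algebra R (= vector fields on Spec R). *)
Definition is_derivation (R : comAlgType k) (d : R -> R) : Prop :=
  (forall (a : k) (x y : R), d (a *: x + y) = a *: d x + d y) /\
  (forall x y : R, d (x * y) = x * d y + d x * y).

(* pi : O_V -> O_X is a surjective morphism of k-algebras (a closed embedding
   X -> V). *)
Definition surj_alg_morph (R S : comAlgType k) (pi : R -> S) : Prop :=
  [/\ forall (a : k) (x y : R), pi (a *: x + y) = a *: pi x + pi y,
      forall x y : R, pi (x * y) = pi x * pi y,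
      pi 1 = 1
    & forall s : S, exists r : R, pi r = s].

Variable n : nat.
Local Notation P := {mpoly k[n]}.

Definition mulop (f : P) : P -> P := fun g => f * g.

(* Grothendieck's differential operators on O_V = k[x_1..x_n] (V = affine n-space):
   order <= 0 : k-linear and O_V-linear; order <= m+1 : k-linear and every
   commutator [D, f] has order <= m. *)
Fixpoint diffop_le (m : nat) (D : P -> P) : Prop :=
  (forall (a : k) (x y : P), D (a *: x + y) = a *: D x + D y) /\
  match m with
  | 0 => forall f g : P, D (f * g) = f * D g
  | m'.+1 => forall f : P, diffop_le m' (fun g => D (f * g) - f * D g)
  end.

Definition diffop (D : P -> P) : Prop := exists m, diffop_le m D.

(* membership in the right ideal S . D_V of D_V generated by a set S of
   operators; the product in D_V is composition, (s . Q)(g) = s (Q g). *)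
Definition in_right_ideal (S : (P -> P) -> Prop) (Q : P -> P) : Prop :=
  exists l : seq ((P -> P) * (P -> P)),
    (forall i, (i < size l)%N -> S (nth (id, id) l i).1 /\ diffop (nth (id, id) l i).2) /\
    forall g : P, Q g = \sum_(p <- l) p.1 (p.2 g).

Definition in_vect_values (A : comAlgType k) (a : A) : Prop :=
  exists l : seq ((A -> A) * A),
    (forall i, (i < size l)%N -> is_derivation (nth (id, 0) l i).1) /\
    a = \sum_(p <- l) p.1 p.2.

Definition in_vect_ideal (A : comAlgType k) (a : A) : Prop :=
  exists l : seq (A * (A -> A) * A),
    (forall i, (i < size l)%N -> is_derivation (nth (0, id, 0) l i).1.2) /\
    a = \sum_(p <- l) p.1.1 * p.1.2 p.2.

End Defs.

(* Main.v *)
Require Import Defs.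
From HB Require Import structures.
From mathcomp Require Import all_boot all_order all_algebra.
From mathcomp Require Import mpoly.
From mathcomp Require Import ring.
Set Implicit Arguments. Unset Strict Implicit. Unset Printing Implicit Defensive.
Import GRing.Theory.
Local Open Scope ring_scope.


Section Gen.
Variable k : fieldType.

Definition klin (U V : lmodType k) (f : U -> V) :=
  forall (a : k) (x y : U), f (a *: x + y) = a *: f x + f y.

Lemma klin0 (U V : lmodType k) (f : U -> V) : klin f -> f 0 = 0.
Proof.
move=> h; have := h 1 0 0; rewrite !scale1r addr0.
by move/(congr1 (fun z => z - f 0)); rewrite addrK subrr => /esym.
Qed.

Lemma klinD (U V : lmodType k) (f : U -> V) : klin f -> forall x y, f (x + y) = f x + f y.
Proof. by move=> h x y; have := h 1 x y; rewrite !scale1r. Qed.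

Lemma klinZ (U V : lmodType k) (f : U -> V) : klin f -> forall a x, f (a *: x) = a *: f x.
Proof. by move=> h a x; rewrite -[a *: x]addr0 h klin0 // addr0. Qed.

Lemma klinN (U V : lmodType k) (f : U -> V) : klin f -> forall x, f (- x) = - f x.
Proof. by move=> h x; rewrite -scaleN1r klinZ // scaleN1r. Qed.

Lemma klinB (U V : lmodType k) (f : U -> V) : klin f -> forall x y, f (x - y) = f x - f y.
Proof. by move=> h x y; rewrite klinD // klinN. Qed.

Lemma klin_sum (U V : lmodType k) (f : U -> V) (T : Type) (s : seq T) (F : T -> U) :
  klin f -> f (\sum_(x <- s) F x) = \sum_(x <- s) f (F x).
Proof.
move=> h; elim: s => [|x s IH]; first by rewrite !big_nil klin0.
by rewrite !big_cons klinD // IH.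
Qed.

End Gen.


Section Poly.
Variable k : fieldType.
Variable n : nat.
Local Notation P := {mpoly k[n]}.

Definition pider (A : comAlgType k) (pi : P -> A) (L : P -> A) :=
  klin L /\ forall g h, L (g * h) = pi g * L h + L g * pi h.

Lemma pider_uniq (A : comAlgType k) (pi : P -> A) (L : P -> A) :
  pi 1 = 1 -> pider pi L -> (forall i, L 'X_i = 0) -> forall g, L g = 0.
Proof.
move=> hp1 [hl hm] hX.
have L1 : L 1 = 0.
  have := hm 1 1; rewrite hp1 !mulr1 !mul1r.
  by move/(congr1 (fun z => z - L 1)); rewrite addrK subrr => /esym.
have LX : forall m, L 'X_[m] = 0.
  move=> m; rewrite mpolyXE_id.
  apply: (big_ind (fun x => L x = 0)) => //.
    by move=> x y hx hy; rewrite hm hx hy mulr0 mul0r addr0.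
  move=> i _; elim: (m i) => [|e IH]; first by rewrite expr0.
  by rewrite exprS hm IH hX mulr0 mul0r addr0.
elim/mpolyind => [|c m p _ _ IH]; first exact: klin0.
by rewrite hl LX IH scaler0 addr0.
Qed.

Lemma pider_sub (A : comAlgType k) (pi : P -> A) (L1 L2 : P -> A) :
  pider pi L1 -> pider pi L2 -> pider pi (fun g => L1 g - L2 g).
Proof.
move=> [l1 m1] [l2 m2]; split.
  by move=> a x y; rewrite l1 l2 scalerBr; ring.
by move=> g h; rewrite m1 m2; ring.
Qed.

Definition Dc (c : 'I_n -> P) (g : P) : P := \sum_(j < n) c j * mderiv j g.

Lemma Dc_der c : is_derivation (Dc c).
Proof.
split.
  move=> a x y; rewrite /Dc scaler_sumr -big_split /=.
  by apply: eq_bigr => j _; rewrite mderivD mderivZ mulrDr scalerAr.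
move=> x y; rewrite /Dc mulr_sumr mulr_suml -big_split /=.
by apply: eq_bigr => j _; rewrite mderivM; ring.
Qed.

Lemma mderivXU (i j : 'I_n) : mderiv j ('X_i : P) = (i == j)%:R.
Proof.
rewrite mderivX mnm1E; case: eqP => [->|_]; last by rewrite scale0r.
have -> : (U_(j) - U_(j))%MM = 0%MM by apply/mnmP => l; rewrite mnmBE subnn mnm0E.
by rewrite scale1r mpolyX0.
Qed.

Lemma Dc_X c i : Dc c 'X_i = c i.
Proof.
rewrite /Dc (bigD1 i) //= mderivXU eqxx mulr1 big1 ?addr0 //.
by move=> j /negbTE hj; rewrite mderivXU eq_sym hj mulr0.
Qed.

Lemma der_expand (D : P -> P) : is_derivation D ->
  forall g, D g = Dc (fun j => D 'X_j) g.
Proof.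
move=> hD g; apply/eqP; rewrite -subr_eq0; apply/eqP.
have := @pider_uniq _ id (fun g => D g - Dc (fun j => D 'X_j) g) erefl.
apply.
  exact: (pider_sub hD (Dc_der _)).
by move=> i; rewrite Dc_X subrr.
Qed.

End Poly.


Section Diff.
Variable k : fieldType.
Variable n : nat.
Local Notation P := {mpoly k[n]}.

Lemma dle_lin m (D : P -> P) : diffop_le m D -> klin D.
Proof. by case: m => [|m] []. Qed.

Lemma dle_ext m : forall (D E : P -> P), (forall g, D g = E g) ->
  diffop_le m D -> diffop_le m E.
Proof.
elim: m => [|m IH] D E hDE [hl hc].
  split; first by move=> a x y; rewrite -!hDE hl.
  by move=> f g; rewrite -!hDE hc.
split; first by move=> a x y; rewrite -!hDE hl.
by move=> f; apply: IH (hc f) => g; rewrite !hDE.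
Qed.

Lemma dle_zero m : diffop_le m (fun _ : P => 0).
Proof.
elim: m => [|m IH]; split => //.
- by move=> a x y; rewrite scaler0 addr0.
- by move=> f g; rewrite mulr0.
- by move=> a x y; rewrite scaler0 addr0.
- by move=> f; apply: dle_ext IH => g; rewrite mulr0 subr0.
Qed.

Lemma dle_add m : forall (D E : P -> P), diffop_le m D -> diffop_le m E ->
  diffop_le m (fun g => D g + E g).
Proof.
elim: m => [|m IH] D E [hl hc] [hl' hc'].
  split; first by move=> a x y; rewrite hl hl' scalerDr; ring.
  by move=> f g; rewrite hc hc' mulrDr.
split; first by move=> a x y; rewrite hl hl' scalerDr; ring.
move=> f; apply: dle_ext (IH _ _ (hc f) (hc' f)) => g /=; ring.
Qed.

Lemma dle_mono m : forall D : P -> P, diffop_le m D -> diffop_le m.+1 D.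
Proof.
elim: m => [|m IH] D [hl hc].
  split => // f.
  by apply: dle_ext (dle_zero 0) => g; rewrite hc subrr.
split => // f; exact: IH (hc f).
Qed.

Lemma dle_monoS m s : (m <= s)%N -> forall D : P -> P, diffop_le m D -> diffop_le s D.
Proof.
move=> /subnK <-; elim: (s - m)%N => [|d IH] D hD //.
by rewrite addSn; apply: dle_mono; apply: IH.
Qed.

Lemma dle_comp s : forall m m' (D E : P -> P), (m + m' <= s)%N ->
  diffop_le m D -> diffop_le m' E -> diffop_le s (fun g => D (E g)).
Proof.
elim: s => [|s IH] m m' D E hs hD hE.
  move: hs; rewrite leqn0 addn_eq0 => /andP[/eqP hm /eqP hm']; subst m m'.
  case: hD => [hl hc]; case: hE => [hl' hc']; split.
    by move=> a x y; rewrite hl' hl.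
  by move=> f g; rewrite hc' hc.
have lD := dle_lin hD; have lE := dle_lin hE.
split; first by move=> a x y; rewrite lE lD.
move=> f.
apply: (@dle_ext _ (fun g => D (E (f * g) - f * E g) + (D (f * E g) - f * D (E g)))).
  by move=> g; rewrite (klinB lD); ring.
apply: dle_add.
  case: m' hs hE {lE} => [|m'] hs [hl' hc'].
    by apply: dle_ext (dle_zero s) => g; rewrite hc' subrr klin0.
  by apply: (IH m m' D _ _ hD (hc' f)); rewrite addnS ltnS in hs.
case: m hs hD {lD} => [|m] hs [hl hc].
  by apply: dle_ext (dle_zero s) => g; rewrite hc subrr.
apply: (IH m m' (fun g => D (f * g) - f * D g) E _ (hc f) hE); by rewrite addSn ltnS in hs.
Qed.

Lemma diffop_comp (D E : P -> P) : diffop D -> diffop E -> diffop (fun g => D (E g)).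
Proof. by move=> [m hD] [m' hE]; exists (m + m')%N; apply: (dle_comp (m := m) (m' := m')). Qed.

Lemma diffop_id : diffop (fun g : P => g).
Proof. by exists 0%N; split. Qed.

Lemma diffop_mulop (b : P) : diffop (mulop b).
Proof.
exists 0%N; split.
  by move=> a x y; rewrite /mulop mulrDr scalerAr.
by move=> f g; rewrite /mulop mulrCA.
Qed.

Lemma dle0_mulop (b : P) : diffop_le 0 (mulop b).
Proof.
split.
  by move=> a x y; rewrite /mulop mulrDr scalerAr.
by move=> f g; rewrite /mulop mulrCA.
Qed.

Lemma diffop_der (D : P -> P) : is_derivation D -> diffop D.
Proof.
move=> [hl hm]; exists 1%N; split => // f.
by apply: dle_ext (dle0_mulop (D f)) => g; rewrite /mulop hm; ring.
Qed.

End Diff.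


Section RI.
Variable k : fieldType.
Variable n : nat.
Local Notation P := {mpoly k[n]}.
Implicit Types S : (P -> P) -> Prop.

Lemma RI_ext S (Q Q' : P -> P) : (forall g, Q g = Q' g) ->
  in_right_ideal S Q -> in_right_ideal S Q'.
Proof. by move=> h [l [hl he]]; exists l; split => // g; rewrite -h. Qed.

Lemma RI_0 S : in_right_ideal S (fun _ => 0).
Proof. by exists [::]; split => // g; rewrite big_nil. Qed.

Lemma RI_add S (Q1 Q2 : P -> P) : in_right_ideal S Q1 -> in_right_ideal S Q2 ->
  in_right_ideal S (fun g => Q1 g + Q2 g).
Proof.
move=> [l1 [hl1 he1]] [l2 [hl2 he2]]; exists (l1 ++ l2); split.
  move=> i; rewrite size_cat nth_cat => hs; case: (ltnP i (size l1)) => hi; first exact: hl1 hi.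
  by apply: hl2; rewrite -(ltn_add2l (size l1)) subnKC.
by move=> g; rewrite big_cat he1 he2.
Qed.

Lemma RI_gen S (s R : P -> P) : S s -> diffop R -> in_right_ideal S (fun g => s (R g)).
Proof.
move=> hs hR; exists [:: (s, R)]; split; last by move=> g; rewrite big_seq1.
by case.
Qed.

Lemma RI_sum S (T : Type) (r : seq T) (F : T -> P -> P) :
  (forall x, in_right_ideal S (F x)) ->
  in_right_ideal S (fun g => \sum_(x <- r) F x g).
Proof.
move=> h; elim: r => [|x r IH].
  by apply: RI_ext (RI_0 S) => g; rewrite big_nil.
by apply: RI_ext (RI_add (h x) IH) => g; rewrite big_cons.
Qed.

Lemma RI_trans S S' (T Q : P -> P) :
  (forall s R, S s -> diffop R -> in_right_ideal S' (fun g => s (R (T g)))) ->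
  in_right_ideal S Q -> in_right_ideal S' (fun g => Q (T g)).
Proof.
move=> H [l [hl he]].
apply: (@RI_ext _ (fun g => \sum_(p <- l) p.1 (p.2 (T g)))); first by move=> g; rewrite he.
elim: l hl {he} => [|p l IH] hl.
  by apply: RI_ext (RI_0 S') => g; rewrite big_nil.
apply: (@RI_ext _ (fun g => p.1 (p.2 (T g)) + \sum_(q <- l) q.1 (q.2 (T g)))).
  by move=> g; rewrite big_cons.
apply: RI_add.
  by have [h1 h2] := hl 0%N erefl; apply: H.
by apply: IH => i hi; apply: (hl i.+1).
Qed.

End RI.

Section VV.
Variable k : fieldType.
Variable A : comAlgType k.

Lemma der_scale (u : A) (xi : A -> A) : is_derivation xi ->
  is_derivation (fun x => u * xi x).
Proof.
move=> [hl hm]; split.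
  by move=> a x y; rewrite hl mulrDr scalerAr.
by move=> x y; rewrite hm; ring.
Qed.

Lemma VV_0 : in_vect_values (0 : A).
Proof. by exists [::]; split => //; rewrite big_nil. Qed.

Lemma VV_add (a b : A) : in_vect_values a -> in_vect_values b -> in_vect_values (a + b).
Proof.
move=> [l1 [hl1 he1]] [l2 [hl2 he2]]; exists (l1 ++ l2); split.
  move=> i; rewrite size_cat nth_cat => hs; case: (ltnP i (size l1)) => hi; first exact: hl1 hi.
  by apply: hl2; rewrite -(ltn_add2l (size l1)) subnKC.
by rewrite big_cat he1 he2.
Qed.

Lemma VV_gen (xi : A -> A) (a : A) : is_derivation xi -> in_vect_values (xi a).
Proof.
move=> hxi; exists [:: (xi, a)]; split; last by rewrite big_seq1.
by case.
Qed.

Lemma VV_VI (a : A) : in_vect_values a <-> in_vect_ideal a.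
Proof.
split.
  move=> [l [hl he]]; exists (map (fun p => (1, p.1, p.2)) l); split.
    move=> i; rewrite size_map => hi.
    by rewrite (nth_map (id, 0)) //; apply: hl.
  by rewrite he big_map; apply: eq_bigr => p _; rewrite mul1r.
move=> [l [hl he]]; subst a.
elim: l hl => [|p l IH] hl; first by rewrite big_nil; exact: VV_0.
rewrite big_cons; apply: VV_add; last by apply: IH => i hi; apply: (hl i.+1).
have := hl 0%N erefl => /= hd.
exact: (VV_gen p.2 (der_scale p.1.1 hd)).
Qed.

End VV.


Section Lift.
Variable k : fieldType.
Variable n : nat.
Local Notation P := {mpoly k[n]}.
Variable A : comAlgType k.
Variable pi : P -> A.
Hypothesis hpi : surj_alg_morph pi.

Lemma mderiv_der (j : 'I_n) : is_derivation (mderiv j : P -> P).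
Proof.
split; first by move=> a x y; rewrite mderivD mderivZ.
by move=> x y; rewrite mderivM; ring.
Qed.

Lemma lift_der (xi : A -> A) : is_derivation xi ->
  exists D : P -> P, is_derivation D /\ forall g, pi (D g) = xi (pi g).
Proof.
case: hpi => hl hm h1 hs [xl xm].
have hc : forall j : 'I_n, exists r : P, pi r == xi (pi 'X_j).
  by move=> j; have [r hr] := hs (xi (pi 'X_j)); exists r; apply/eqP.
pose c j := xchoose (hc j).
exists (Dc c); split; first exact: Dc_der.
have [dl dm] := Dc_der c.
move=> g; apply/eqP; rewrite -subr_eq0; apply/eqP.
apply: (@pider_uniq _ _ _ pi (fun g => pi (Dc c g) - xi (pi g)) h1).
  apply: pider_sub; split.
  - by move=> a x y; rewrite dl hl.
  - by move=> x y; rewrite dm (klinD hl) !hm.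
  - by move=> a x y; rewrite hl xl.
  - by move=> x y; rewrite hm xm.
by move=> i; rewrite Dc_X (eqP (xchooseP (hc i))) subrr.
Qed.

End Lift.

Theorem proposition3p1 (k : closedFieldType) (hk : [pchar k] =i pred0)
    (n : nat) (A : comAlgType k) (pi : {mpoly k[n]} -> A)
    (hpi : surj_alg_morph pi) :
  let gens : ({mpoly k[n]} -> {mpoly k[n]}) -> Prop := fun D =>
    (exists f, pi f = 0 /\ D = mulop f) \/
    (is_derivation D /\
       exists xi : A -> A, is_derivation xi /\ forall g, pi (D g) = xi (pi g)) in
  (* Z is the support of M(X, Vect X) *)
  (forall f : {mpoly k[n]}, in_right_ideal gens (mulop f) <-> in_vect_ideal (pi f)) /\
  (* M(X, Vect X) = D_Z *)
  (forall Q : {mpoly k[n]} -> {mpoly k[n]},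
     in_right_ideal gens Q <->
     in_right_ideal (fun D => exists f, in_vect_ideal (pi f) /\ D = mulop f) Q) /\
  (* (O_X)_{Vect X} = O_Z *)
  (forall a : A, in_vect_values a <-> in_vect_ideal a).
Proof.
move=> gens.
have hpi' := hpi; case: hpi' => hl hm h1 hs.
have pi0 : pi 0 = 0 := klin0 hl.
have gen_mul : forall h, pi h = 0 -> gens (mulop h).
  by move=> h hh; left; exists h.
have gen_sc : forall (D : {mpoly k[n]} -> {mpoly k[n]}) xi u, is_derivation D ->
    is_derivation xi -> (forall g, pi (D g) = xi (pi g)) ->
    gens (fun x => u * D x).
  move=> D xi u hD hxi hDx; right; split; first exact: der_scale.
  exists (fun x => pi u * xi x); split; first exact: der_scale.
  by move=> g; rewrite hm hDx.
have key1 : forall f, in_vect_ideal (pi f) -> in_right_ideal gens (mulop f).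
  move=> f [l [hl' he]].
  suff [e [he1 he2]] : exists e, pi e = \sum_(p <- l) p.1.1 * p.1.2 p.2 /\
      in_right_ideal gens (mulop e).
    apply: (@RI_ext _ _ _ (fun g => mulop (f - e) (id g) + mulop e g)).
      by move=> g; rewrite /mulop; ring.
    apply: RI_add => //; apply: RI_gen; last exact: diffop_id.
    by apply: gen_mul; rewrite (klinB hl) he he1 subrr.
  elim: l hl' {he} => [|p l IH] hl'.
    exists 0; rewrite big_nil pi0; split => //.
    by apply: RI_ext (RI_0 _) => g; rewrite /mulop mul0r.
  have [e [he1 he2]] := IH (fun i hi => hl' i.+1 hi).
  have hxi := hl' 0%N erefl; move: hxi => /= hxi.
  have [h hh] := hs p.1.1; have [b hb] := hs p.2.
  have [D [hD hDx]] := lift_der hpi hxi.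
  exists (h * D b + e); split.
    by rewrite big_cons (klinD hl) hm hDx hh hb he1.
  apply: (@RI_ext _ _ _ (fun g => ((fun x => h * D x) (mulop b g) +
      (fun x => (- (b * h)) * D x) (id g)) + mulop e g)).
    by move=> g; rewrite /mulop (proj2 hD); ring.
  apply: RI_add => //; apply: RI_add.
    apply: (@RI_gen _ _ _ (fun x => h * D x) (mulop b)).
      exact: (gen_sc D p.1.2 _ hD hxi hDx).
    exact: diffop_mulop.
  apply: (@RI_gen _ _ _ (fun x => (- (b * h)) * D x) id).
    exact: (gen_sc D p.1.2 _ hD hxi hDx).
  exact: diffop_id.
split.
  move=> f; split; last exact: key1.
  move=> [l [hl' he]]; apply/VV_VI.
  have -> : f = \sum_(p <- l) p.1 (p.2 1) by rewrite -he /mulop mulr1.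
  rewrite (klin_sum _ _ hl).
  elim: l hl' {he} => [|p l IH] hl'; first by rewrite big_nil; exact: VV_0.
  rewrite big_cons; apply: VV_add; last by apply: IH => i hi; apply: (hl' i.+1).
  have [[[h [hh ->]]|[hD [xi [hxi hDx]]]] _] := hl' 0%N erefl.
    by rewrite /mulop hm hh mul0r; exact: VV_0.
  by rewrite hDx; exact: VV_gen.
split; last exact: VV_VI.
move=> Q; split => hQ.
  apply: (@RI_ext _ _ _ (fun g => Q (id g))) => //.
  apply: (RI_trans (S := gens)) hQ => s R [[h [hh ->]]|[hD [xi [hxi hDx]]]] hR.
    apply: (@RI_gen _ _ _ (mulop h) R) => //; exists h; split => //.
    by rewrite hh; exists [::]; split => //; rewrite big_nil.
  apply: (@RI_ext _ _ _ (fun g => \sum_(j <- index_enum 'I_n)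
     mulop (s 'X_j) (mderiv j (R g)))).
    by move=> g; rewrite (der_expand hD).
  apply: RI_sum => j.
  apply: (@RI_gen _ _ _ (mulop (s 'X_j)) (fun g => mderiv j (R g))).
    exists (s 'X_j); split => //; apply/VV_VI; rewrite hDx; exact: VV_gen.
  apply: diffop_comp hR; exact: diffop_der (@mderiv_der _ _ j).
apply: (@RI_ext _ _ _ (fun g => Q (id g))) => //.
apply: (RI_trans (S := fun D => exists f, in_vect_ideal (pi f) /\ D = mulop f)) hQ.
move=> s R [f [hf ->]] hR.
apply: (RI_trans (S := gens)) (key1 _ hf) => s' R' hs' hR'.
apply: (@RI_gen _ _ _ s' (fun g => R' (R g))) => //.
exact: diffop_comp.
Qed.
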